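(* Let $m\ge 1$, $p\ge 2$, let $a_1,\dots,a_p\in\mathbb C$, and let $b_{j,k}\in\mathbb C\setminus\{0,-1,-2,\dots\}$ for $1\le j\le p-1$, $1\le k\le m$. Then the series $F_C^{p,m}(a,B;x)$ converges absolutely at every point of $$\mathbb D=\{x\in\mathbb C^m \mid \sqrt[p]{|x_1|}+\cdots+\sqrt[p]{|x_m|}<1\}.$$
   Context: Pochhammer's symbol: $(\alpha,n)=\alpha(\alpha+1)\cdots(\alpha+n-1)=\Gamma(\alpha+n)/\Gamma(\alpha)$, $\mathbb N=\{0,1,2,\dots\}$. Parameters: $a={}^t(a_1,\dots,a_p)$ and $B=(b_{j,k})_{1\le j\le p,\,1\le k\le m}$ with the convention $b_{p,k}=1$ for all $k$. The series is $$F_C^{p,m}(a,B;x)=\sum_{(n_1,\dots,n_m)\in\mathbb N^m}\frac{(a_1,n_1+\cdots+n_m)\cdots(a_p,n_1+\cdots+n_m)}{\prod_{k=1}^m\{(b_{1,k},n_k)\cdots(b_{p-1,k},n_k)\,n_k!\}}x_1^{n_1}\cdots x_m^{n_m}.$$ *)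

(* Defs.v *)
From HB Require Import structures.
From mathcomp Require Import all_boot all_order all_algebra.
From mathcomp Require Import all_classical all_reals all_analysis.
From mathcomp Require Import complex.
Set Implicit Arguments. Unset Strict Implicit. Unset Printing Implicit Defensive.
Import Order.TTheory GRing.Theory Num.Theory.
Local Open Scope ring_scope.

Definition pochhammer (F : pzRingType) (alpha : F) (n : nat) : F :=
  \prod_(i < n) (alpha + i%:R).

(* General term of F_C^{p,m}(a,B;x) at the multi-index nn = (n_1,...,n_m).
   a : 'I_p -> C gives a_1..a_p; B : 'I_p.-1 -> 'I_m -> C gives b_{j,k} for
   1 <= j <= p-1 (the convention b_{p,k} = 1 yields the factor n_k!). *)
Definition FC_term (R : realType) (p m : nat) (a : 'I_p -> R[i])
  (B : 'I_p.-1 -> 'I_m -> R[i]) (x : 'I_m -> R[i]) (nn : {ffun 'I_m -> nat})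
  : R[i] :=
  (\prod_(j < p) pochhammer (a j) (\sum_(k < m) nn k)%N)
  / (\prod_(k < m) ((\prod_(j < p.-1) pochhammer (B j k) (nn k)) * (nn k)`!%:R))
  * \prod_(k < m) x k ^+ nn k.

Definition FC_abs_conv (R : realType) (p m : nat) (a : 'I_p -> R[i])
  (B : 'I_p.-1 -> 'I_m -> R[i]) (x : 'I_m -> R[i]) : Prop :=
  summable [set: {ffun 'I_m -> nat}]
    (fun nn => (@complex.Re R `|FC_term a B x nn|)%:E).

Definition FC_domain (R : realType) (p m : nat) (x : 'I_m -> R[i]) : Prop :=
  \sum_(k < m) (@complex.Re R `|x k|) `^ (p%:R^-1) < 1.

(* Main.v *)
Set Warnings "-all".
Require Import Defs.
From HB Require Import structures.
From mathcomp Require Import all_boot all_order all_algebra.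
From mathcomp Require Import all_classical all_reals all_analysis.
From mathcomp Require Import complex.
From mathcomp Require Import ring lra.
Import Order.TTheory GRing.Theory Num.Theory.
Local Open Scope ring_scope.


Lemma geo_bound (R : realFieldType) (q : R) n : 0 <= q -> q < 1 ->
  \sum_(j < n) q ^+ j <= (1 - q)^-1.
Proof.
move=> q0 q1; have h1 : 0 < 1 - q by rewrite subr_gt0.
elim: n => [|n IH]; first by rewrite big_ord0 invr_ge0 ltW.
rewrite big_ord_recl expr0.
under eq_bigr do rewrite exprS.
rewrite -mulr_sumr.
apply: (le_trans (y := 1 + q * (1 - q)^-1)).
  by rewrite lerD2l ler_wpM2l.
rewrite le_eqVlt; apply/orP; left; apply/eqP; field.
by rewrite lt0r_neq0.
Qed.

Lemma ratio_bound (R : realFieldType) (u : nat -> R) (th : R) N0 :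
  0 < th -> (forall n, 0 <= u n) ->
  (forall n, (N0 <= n)%N -> u n.+1 <= th * u n) ->
  forall n, u n <= (\sum_(i < N0.+1) u i / th ^+ i) * th ^+ n.
Proof.
move=> th0 u0 hu.
set C := \sum_(i < N0.+1) _.
have Hc i : (i <= N0)%N -> u i <= C * th ^+ i.
  move=> le; have lt : (i < N0.+1)%N by [].
  rewrite -ler_pdivrMr ?exprn_gt0 //.
  rewrite /C (bigD1 (Ordinal lt)) //= lerDl sumr_ge0 // => j _.
  by rewrite divr_ge0 // exprn_ge0 // ltW.
elim=> [|n IH]; first exact: Hc.
case: (leqP n.+1 N0) => [le|lt]; first exact: Hc.
apply: (le_trans (hu n lt)).
rewrite exprS mulrCA ler_wpM2l // ltW //.
Qed.

Lemma multinom_le (R : realFieldType) (I : Type) (r : seq I) (n : I -> nat)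
  (s : I -> R) : (forall i, 0 <= s i) ->
  (\sum_(i <- r) n i)`!%:R / (\prod_(i <- r) (n i)`!%:R) *
    \prod_(i <- r) s i ^+ n i <= (\sum_(i <- r) s i) ^+ (\sum_(i <- r) n i).
Proof.
move=> s0; elim: r => [|i r IH]; first by rewrite !big_nil /= divr1 mulr1.
rewrite !big_cons.
set A := n i; set Bn := \sum_(j <- r) n j; set a := s i; set b := \sum_(j <- r) s j.
set P := \prod_(j <- r) (n j)`!%:R; set Q := \prod_(j <- r) s j ^+ n j.
have Pne : P != 0.
  by rewrite /P gt_eqF // prodr_gt0 // => j _; rewrite ltr0n fact_gt0.
have Ane : (A`!%:R : R) != 0 by rewrite pnatr_eq0 -lt0n fact_gt0.
have hf : ((A + Bn)`!%:R : R) = 'C(A + Bn, A)%:R * A`!%:R * Bn`!%:R.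
  by rewrite -(bin_fact (leq_addr Bn A)) addKn !natrM mulrA.
have b0 : 0 <= b by rewrite /b sumr_ge0.
have a0 : 0 <= a by exact: s0.
rewrite hf.
have -> : 'C(A + Bn, A)%:R * A`!%:R * Bn`!%:R / (A`!%:R * P) * (a ^+ A * Q)
   = 'C(A + Bn, A)%:R * a ^+ A * (Bn`!%:R / P * Q) :> R.
  by field; rewrite Pne Ane.
apply: (le_trans (y := 'C(A + Bn, A)%:R * a ^+ A * b ^+ Bn)).
  by rewrite ler_wpM2l // mulr_ge0 // exprn_ge0.
rewrite addrC exprDn.
have lt : (A < (A + Bn).+1)%N by rewrite ltnS leq_addr.
rewrite (bigD1 (Ordinal lt)) //= addKn.
rewrite -[X in X <= _]addr0 lerD //.
  by rewrite -mulr_natl le_eqVlt; apply/orP; left; apply/eqP; ring.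
by apply: sumr_ge0 => j _; rewrite mulrn_wge0 // mulr_ge0 // exprn_ge0.
Qed.




Lemma sum_subseq (R : numDomainType) (T : eqType) (s t : seq T) (g : T -> R) :
  uniq s -> uniq t -> {subset s <= t} -> (forall x, 0 <= g x) ->
  \sum_(x <- s) g x <= \sum_(x <- t) g x.
Proof.
move=> us ut st g0.
rewrite [X in _ <= X](bigID (fun x => x \in s)) /=.
have -> : \sum_(x <- t | x \in s) g x = \sum_(x <- s) g x.
  rewrite -big_filter; apply: perm_big; apply: uniq_perm => //.
    exact: filter_uniq.
  by move=> x; rewrite mem_filter; case xs: (x \in s) => //=; rewrite (st x xs).
by rewrite lerDl sumr_ge0.
Qed.

Lemma box_sum (R : realFieldType) m (q : R) (s : seq {ffun 'I_m -> nat}) :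
  uniq s -> 0 <= q -> q < 1 ->
  \sum_(x <- s) \prod_(k < m) q ^+ (x k) <= (1 - q)^-1 ^+ m.
Proof.
move=> us q0 q1.
set K := \max_(x <- s) \max_(k < m) x k.
pose e (f : {ffun 'I_m -> 'I_K.+1}) : {ffun 'I_m -> nat} := [ffun k => val (f k)].
have einj : injective e.
  move=> f1 f2 /ffunP h; apply/ffunP => k; apply/val_inj.
  by have := h k; rewrite !ffunE.
pose t := map e (enum {ffun 'I_m -> 'I_K.+1}).
have ut : uniq t by rewrite map_inj_uniq // enum_uniq.
have st : {subset s <= t}.
  move=> x xs; apply/mapP; exists [ffun k => inord (x k)]; first by rewrite mem_enum.
  apply/ffunP => k; rewrite /e !ffunE /= inordK // ltnS.
  have H1 := @leq_bigmax_seq _ s xpredT (fun y : {ffun 'I_m -> nat} => \max_(k < m) y k) x xs isT.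
  apply: leq_trans H1; rewrite /=.
  exact: (@leq_bigmax _ (fun k => x k) k).
apply: le_trans; first apply: (@sum_subseq _ _ _ _ (fun x : {ffun 'I_m -> nat} => \prod_(k < m) q ^+ (x k)) us ut st).
  by move=> x; apply: prodr_ge0 => k _; apply: exprn_ge0.
rewrite /t big_map big_enum /=.
under eq_bigr do under eq_bigr do rewrite ffunE.
rewrite -(bigA_distr_bigA (fun (k : 'I_m) (j : 'I_K.+1) => q ^+ j)) /=.
rewrite -[in X in _ <= X](card_ord m) -prodr_const.
apply: ler_prod => k _; rewrite sumr_ge0 /=; last by move=> j _; apply: exprn_ge0.
exact: geo_bound.
Qed.




Section NC.
Context {R : realType}.
Definition nc (z : R[i]) : R := ComplexField.Normc.normc z.

Lemma nc_ge0 z : 0 <= nc z.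
Proof. by case: z => a b; rewrite /nc /= sqrtr_ge0. Qed.

Lemma nc_prod (I : Type) (r : seq I) (P : pred I) (F : I -> R[i]) :
  nc (\prod_(i <- r | P i) F i) = \prod_(i <- r | P i) nc (F i).
Proof.
exact: (big_morph nc (@ComplexField.Normc.normcM R) (@ComplexField.Normc.normc1 R)).
Qed.

Lemma ncM z w : nc (z * w) = nc z * nc w.
Proof. exact: ComplexField.Normc.normcM. Qed.

Lemma ncV z : nc (z^-1) = (nc z)^-1.
Proof. exact: ComplexField.Normc.normcV. Qed.

Lemma ncX z n : nc (z ^+ n) = nc z ^+ n.
Proof.
elim: n => [|n IH]; first by rewrite !expr0 /nc ComplexField.Normc.normc1.
by rewrite !exprS ncM IH.
Qed.

Lemma nc_nat n : nc n%:R = n%:R.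
Proof. by rewrite /nc normcMn ComplexField.Normc.normc1. Qed.

Lemma ncD z w : nc (z + w) <= nc z + nc w.
Proof. exact: le_normcD. Qed.

Lemma nc_gt0 z : z != 0 -> 0 < nc z.
Proof.
move=> nz; rewrite lt_def nc_ge0 andbT; apply/eqP => h.
by move: nz; rewrite (ComplexField.Normc.eq0_normc h) eqxx.
Qed.

Definition alpha (z : R[i]) N := (\prod_(i < N) nc (z + i%:R)) / N`!%:R.
Definition beta (z : R[i]) n := n`!%:R / \prod_(i < n) nc (z + i%:R).

Lemma alpha_ge0 z N : 0 <= alpha z N.
Proof. by rewrite /alpha divr_ge0 // prodr_ge0 // => i _; exact: nc_ge0. Qed.

Lemma beta_ge0 z N : 0 <= beta z N.
Proof. by rewrite /beta divr_ge0 // prodr_ge0 // => i _; exact: nc_ge0. Qed.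

Lemma alphaS z N : alpha z N.+1 = alpha z N * (nc (z + N%:R) / N.+1%:R).
Proof.
rewrite /alpha big_ord_recr /= factS natrM.
have h1 : (N`!%:R : R) != 0 by rewrite pnatr_eq0 -lt0n fact_gt0.
have h2 : (N.+1%:R : R) != 0 by rewrite pnatr_eq0.
by rewrite invfM; ring.
Qed.

Lemma betaS z n : (forall k, z + k%:R != 0) ->
  beta z n.+1 = beta z n * (n.+1%:R / nc (z + n%:R)).
Proof.
move=> hz; rewrite /beta big_ord_recr /= factS natrM.
have h1 : \prod_(i < n) nc (z + i%:R) != 0.
  by rewrite gt_eqF // prodr_gt0 // => i _; apply: nc_gt0.
have h2 : nc (z + n%:R) != 0 by rewrite gt_eqF // nc_gt0.
by rewrite invfM; ring.
Qed.

Lemma alpha_bound z th : 1 < th -> forall N,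
  alpha z N <= (\sum_(i < (Num.bound (nc z / (th - 1))).+1)
     alpha z i / th ^+ i) * th ^+ N.
Proof.
move=> th1; apply: ratio_bound; first by apply: lt_trans th1.
  by move=> n; apply: alpha_ge0.
move=> n hn; rewrite alphaS mulrC ler_wpM2r ?alpha_ge0 //.
have th0 : 0 < th - 1 by rewrite subr_gt0.
have hb := archi_boundP (divr_ge0 (nc_ge0 z) (ltW th0)).
have hn' : ((Num.bound (nc z / (th - 1)))%:R <= n%:R :> R) by rewrite ler_nat.
have H : nc z < (th - 1) * n%:R.
  by rewrite mulrC -ltr_pdivrMr //; apply: lt_le_trans hb hn'.
rewrite ler_pdivrMr ?ltr0Sn //.
apply: (le_trans (ncD _ _)); rewrite nc_nat.
have n0 : (0 : R) <= n%:R by [].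
rewrite -natr1; nra.
Qed.

Lemma beta_bound z th : 1 < th -> (forall k, z + k%:R != 0) -> forall n,
  beta z n <= (\sum_(i < (Num.bound ((1 + th * nc z) / (th - 1))).+1)
     beta z i / th ^+ i) * th ^+ n.
Proof.
move=> th1 hz; apply: ratio_bound; first by apply: lt_trans th1.
  by move=> n; apply: beta_ge0.
move=> n hn; rewrite betaS // mulrC ler_wpM2r ?beta_ge0 //.
have th0 : 0 < th - 1 by rewrite subr_gt0.
have c0 := nc_ge0 z.
have hb := archi_boundP (divr_ge0 (addr_ge0 ler01 (mulr_ge0 (ltW (lt_trans ltr01 th1)) c0)) (ltW th0)).
have hn' : ((Num.bound ((1 + th * nc z) / (th - 1)))%:R <= n%:R :> R) by rewrite ler_nat.
have H : 1 + th * nc z < (th - 1) * n%:R.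
  by rewrite [(th - 1) * _]mulrC -ltr_pdivrMr //; apply: lt_le_trans hb hn'.
have w0 : 0 < nc (z + n%:R) by apply: nc_gt0.
rewrite ler_pdivrMr //.
have A : (n%:R : R) <= nc (z + n%:R) + nc z.
  have e : (n%:R : R[i]) = (z + n%:R) + - z by ring.
  have := ncD (z + n%:R) (- z); rewrite -e nc_nat.
  by rewrite /nc normcN.
have P : 0 <= th * (nc (z + n%:R) + nc z - n%:R).
  by rewrite mulr_ge0 ?subr_ge0 // ltW // (lt_trans ltr01 th1).
rewrite -natr1; nra.
Qed.
End NC.


Lemma perk (R : fieldType) (p : nat) (f Q Y : R) : (0 < p)%N -> f != 0 -> Q != 0 ->
  f ^+ p.-1 * Q^-1 * (f^-1 * Y) ^+ p = (Q * f)^-1 * Y ^+ p.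
Proof.
case: p => // p _ f0 Q0 /=.
rewrite exprMn exprS exprVn.
have fp : f ^+ p != 0 by rewrite expf_neq0.
move: (f ^+ p) fp => F fp.
by field; rewrite f0 Q0 fp.
Qed.

Lemma big_identity (R : fieldType) (p m : nat) (P : 'I_p -> R)
  (Q : 'I_p.-1 -> 'I_m -> R) (f y : 'I_m -> R) (F : R) (nn : 'I_m -> nat) :
  (0 < p)%N -> F != 0 -> (forall k, f k != 0) -> (forall j k, Q j k != 0) ->
  (\prod_j P j) / (\prod_k ((\prod_j Q j k) * f k)) * \prod_k (y k ^+ p) ^+ nn k
  = (\prod_j (P j / F)) * (\prod_k \prod_j (f k / Q j k)) *
    (F / \prod_k f k * \prod_k y k ^+ nn k) ^+ p.
Proof.
move=> p0 F0 f0 Q0.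
have E1 : \prod_j (P j / F) = (\prod_j P j) * F^-1 ^+ p.
  by rewrite big_split /= prodr_const card_ord.
have E2 : \prod_k \prod_j (f k / Q j k) =
    \prod_k (f k ^+ p.-1 * (\prod_j Q j k)^-1).
  by apply: eq_bigr => k _; rewrite big_split /= prodr_const card_ord prodfV.
have E3 : (F / \prod_k f k * \prod_k y k ^+ nn k) ^+ p =
    F ^+ p * \prod_k ((f k)^-1 * y k ^+ nn k) ^+ p.
  by rewrite -mulrA -prodfV -big_split /= exprMn prodrXl.
have E4 : F^-1 ^+ p * F ^+ p = 1 by rewrite exprVn mulVf // expf_neq0.
rewrite E1 E2 E3 -[in LHS]mulrA -[in LHS]prodfV -[in LHS]big_split /=.
have E5 : \prod_k ((\prod_j Q j k * f k)^-1 * (y k ^+ p) ^+ nn k) =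
    \prod_k (f k ^+ p.-1 / (\prod_j Q j k) * ((f k)^-1 * y k ^+ nn k) ^+ p).
  apply: eq_bigr => k _.
  have Qk0 : \prod_j Q j k != 0 by apply/prodf_neq0 => j _.
  by rewrite (@perk _ p (f k) _ _ p0 (f0 k) Qk0) exprAC.
rewrite E5 [in LHS]big_split /=.
move: (\prod_(j < p) P j) (\prod_k (f k ^+ p.-1 / \prod_j Q j k))
  (\prod_k ((f k)^-1 * y k ^+ nn k) ^+ p) E4 => X Y Z E4.
rewrite -[LHS]mulr1 -E4; ring.
Qed.

Lemma perk_bound (R : realFieldType) (th g : R) p n : 1 <= th -> 0 <= g ->
  (th ^+ n) ^+ p * (th ^+ n) ^+ p.-1 * (g ^+ n) ^+ p <= ((th * th * g) ^+ p) ^+ n.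
Proof.
move=> th1 g0.
rewrite [in X in _ <= X]exprAC !exprMn.
have t0 : 0 <= th ^+ n by rewrite exprn_ge0 // (le_trans ler01).
apply: ler_pM; [by rewrite mulr_ge0 // exprn_ge0 | by rewrite exprn_ge0 // exprn_ge0 | | by []].
apply: ler_wpM2l; first by rewrite exprn_ge0.
by rewrite ler_weXn2l ?exprn_ege1 // leq_pred.
Qed.

Theorem mainTheorem1 (R : realType) (m p : nat) (hm : (1 <= m)%N) (hp : (2 <= p)%N)
  (a : 'I_p -> R[i]) (B : 'I_p.-1 -> 'I_m -> R[i])
  (hB : forall (j : 'I_p.-1) (k : 'I_m) (n : nat), B j k != - (n%:R))
  (x : 'I_m -> R[i]) (hx : FC_domain p x) :
  FC_abs_conv a B x.
Proof.
have p0 : (0 < p)%N by apply: leq_trans hp.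
pose r k := nc (x k) `^ (p%:R^-1).
have hr : \sum_k r k < 1 := hx.
have r0 k : 0 <= r k by apply: powR_ge0.
have rp k : r k ^+ p = nc (x k).
  rewrite -powR_mulrn // -powRrM mulVf ?powRr1 ?nc_ge0 //.
  by rewrite pnatr_eq0 -lt0n.
set rho := \sum_k r k in hr.
have rho0 : 0 <= rho by apply: sumr_ge0.
have rk1 k : r k <= rho.
  by rewrite /rho (bigD1 k) //= lerDl sumr_ge0.
have m0 : (0 : R) < m%:R by rewrite ltr0n.
have m1 : (1 : R) <= m%:R by rewrite ler1n.
set d := (1 - rho) / m%:R.
have d0 : 0 < d by rewrite divr_gt0 // subr_gt0.
have d1 : d <= 1 by rewrite ler_pdivrMr // mul1r; lra.
pose s k := r k + d.
have s0 k : 0 <= s k by rewrite addr_ge0 // ltW.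
have sum_s : \sum_k s k = 1.
  rewrite big_split /= sumr_const card_ord -/rho -mulr_natr /d divfK ?gt_eqF //.
  by ring.
pose g := (1 + d)^-1.
have g0 : 0 <= g by rewrite invr_ge0; lra.
have rgs k : r k <= g * s k.
  rewrite mulrC ler_pdivlMr; last by lra.
  have := rk1 k; have := r0 k; rewrite /s; nra.
pose th := 1 + d / 3%:R.
have th1 : 1 < th by rewrite /th ltrDl divr_gt0.
have th1' : 1 <= th by apply: ltW.
pose q := (th * th * g) ^+ p.
have q0 : 0 <= q by rewrite exprn_ge0 // !mulr_ge0 // ltW // (lt_trans ltr01).
have q1 : q < 1.
  rewrite exprn_ilt1 ?mulr_ge0 // ?(ltW (lt_trans ltr01 th1)) // ?gt_eqF //.
  rewrite ltr_pdivrMr; last by lra.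
  rewrite mul1r /th; nra.
pose Ca j := \sum_(i < (Num.bound (nc (a j) / (th - 1))).+1) alpha (a j) i / th ^+ i.
pose Cb j k := \sum_(i < (Num.bound ((1 + th * nc (B j k)) / (th - 1))).+1)
   beta (B j k) i / th ^+ i.
have th0 : 0 <= th by lra.
have Ca0 j : 0 <= Ca j.
  by apply: sumr_ge0 => i _; rewrite divr_ge0 ?alpha_ge0 ?exprn_ge0.
have Cb0 j k : 0 <= Cb j k.
  by apply: sumr_ge0 => i _; rewrite divr_ge0 ?beta_ge0 ?exprn_ge0.
pose Cst := (\prod_j Ca j) * \prod_k \prod_j Cb j k.
have Cst0 : 0 <= Cst by rewrite mulr_ge0 // !prodr_ge0 // => k _; rewrite prodr_ge0.
have hBz j k n : B j k + n%:R != 0 by rewrite addr_eq0 hB.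
have key nn : nc (FC_term a B x nn) <= Cst * \prod_k q ^+ nn k.
  set N := (\sum_(k < m) nn k)%N.
  pose P j := \prod_(i < N) nc (a j + i%:R).
  pose Q j k := \prod_(i < nn k) nc (B j k + i%:R).
  pose f k := ((nn k)`!%:R : R).
  pose F := (N`!%:R : R).
  have E0 : nc (FC_term a B x nn) = (\prod_j P j) / (\prod_k ((\prod_j Q j k) * f k))
      * \prod_k (r k ^+ p) ^+ nn k.
    rewrite /FC_term ncM ncM ncV !nc_prod.
    congr (_ * _ * _).
    - by apply: eq_bigr => j _; rewrite /pochhammer nc_prod.
    - congr (_ ^-1); apply: eq_bigr => k _; rewrite ncM nc_prod nc_nat.
      by congr (_ * _); apply: eq_bigr => j _; rewrite /pochhammer nc_prod.
    - by apply: eq_bigr => k _; rewrite ncX rp.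
  have F0 : F != 0 by rewrite pnatr_eq0 -lt0n fact_gt0.
  have f0 k : f k != 0 by rewrite pnatr_eq0 -lt0n fact_gt0.
  have Q0 j k : Q j k != 0.
    by rewrite gt_eqF // prodr_gt0 // => i _; apply: nc_gt0.
  rewrite E0 (big_identity _ _ _ P Q f r F nn p0 F0 f0 Q0).
  have Mb : F / \prod_k f k * \prod_k r k ^+ nn k <= g ^+ N.
    have h1 : \prod_k r k ^+ nn k <= g ^+ N * \prod_k s k ^+ nn k.
      rewrite /N expr_sum -big_split /=.
      apply: ler_prod => k _; rewrite exprn_ge0 //= -exprMn.
      by rewrite lerXn2r ?nnegrE ?mulr_ge0.
    have Fp : 0 <= F / \prod_k f k by rewrite divr_ge0 // prodr_ge0.
    apply: (le_trans (ler_wpM2l Fp h1)).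
    rewrite mulrCA -[X in _ <= X]mulr1 ler_wpM2l ?exprn_ge0 //.
    have := multinom_le _ _ (index_enum 'I_m) (fun k => nn k) s s0.
    by rewrite sum_s expr1n.
  have M0 : 0 <= F / \prod_k f k * \prod_k r k ^+ nn k.
    by rewrite !mulr_ge0 ?invr_ge0 ?prodr_ge0 // => k _; rewrite exprn_ge0.
  have A0 : 0 <= \prod_j (P j / F).
    by apply: prodr_ge0 => j _; exact: (alpha_ge0 (a j) N).
  have B0 : 0 <= \prod_k \prod_j (f k / Q j k).
    by apply: prodr_ge0 => k _; apply: prodr_ge0 => j _; exact: (beta_ge0 (B j k) (nn k)).
  apply: (le_trans (y := (\prod_j (Ca j * th ^+ N)) *
     (\prod_k \prod_j (Cb j k * th ^+ nn k)) * (g ^+ N) ^+ p)).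
    apply: ler_pM; [exact: mulr_ge0 | exact: exprn_ge0 | | ].
      apply: ler_pM => //.
        apply: ler_prod => j _; apply/andP; split; first exact: (alpha_ge0 (a j) N).
        exact: (alpha_bound (a j) th th1 N).
      apply: ler_prod => k _; rewrite prodr_ge0 /=; last first.
        by move=> j _; exact: (beta_ge0 (B j k) (nn k)).
      apply: ler_prod => j _; apply/andP; split; first exact: (beta_ge0 (B j k) (nn k)).
      exact: (beta_bound (B j k) th th1 (hBz j k) (nn k)).
    by rewrite lerXn2r ?nnegrE ?exprn_ge0.
  have H1 : \prod_j (Ca j * th ^+ N) = (\prod_j Ca j) * \prod_k (th ^+ nn k) ^+ p.
    by rewrite big_split /= prodr_const card_ord /N expr_sum prodrXl.
  have H2 : \prod_k \prod_j (Cb j k * th ^+ nn k) =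
      (\prod_k \prod_j Cb j k) * \prod_k (th ^+ nn k) ^+ p.-1.
    rewrite -big_split; apply: eq_bigr => k _.
    by rewrite big_split /= prodr_const card_ord.
  have H3 : (g ^+ N) ^+ p = \prod_k (g ^+ nn k) ^+ p by rewrite expr_sum prodrXl.
  rewrite H1 H2 H3.
  have -> : (\prod_j Ca j * \prod_k (th ^+ nn k) ^+ p) *
     ((\prod_k \prod_j Cb j k) * \prod_k (th ^+ nn k) ^+ p.-1) *
     \prod_k (g ^+ nn k) ^+ p =
     Cst * \prod_k ((th ^+ nn k) ^+ p * (th ^+ nn k) ^+ p.-1 * (g ^+ nn k) ^+ p).
    rewrite !big_split /= /Cst.
    move: (\prod_j Ca j) (\prod_k \prod_j Cb j k) (\prod_k (th ^+ nn k) ^+ p)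
      (\prod_k (th ^+ nn k) ^+ p.-1) (\prod_k (g ^+ nn k) ^+ p) => X1 X2 X3 X4 X5.
    ring.
  apply: ler_wpM2l => //; apply: ler_prod => k _.
  rewrite !mulr_ge0 ?exprn_ge0 //=.
  exact: perk_bound.
rewrite /FC_abs_conv /summable.
apply: (le_lt_trans (y := ((Cst * (1 - q)^-1 ^+ m)%:E))); last by rewrite ltry.
apply: ge_ereal_sup => _ [A [finA _] <-].
rewrite fsbig_finite //=.
rewrite sumEFin lee_fin.
have H nn : `|nc (FC_term a B x nn)| <= Cst * \prod_k q ^+ nn k.
  by rewrite ger0_norm ?nc_ge0 //; exact: key.
apply: le_trans; first by apply: ler_sum => nn _; exact: H nn.
rewrite -mulr_sumr ler_wpM2l //.
by apply: box_sum => //; exact: finmap.fset_uniq.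
Qed.
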